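(* Let $\mathfrak{g}$ be a $2$-dimensional non-abelian complex Lie algebra. Then every completion of the universal enveloping algebra $U(\mathfrak{g})$ with respect to a submultiplicative prenorm is a PI-algebra.
   Context: A submultiplicative prenorm on $U(\mathfrak{g})$ is a seminorm $p$ with $p(ab)\le p(a)p(b)$; the completion is the Banach algebra obtained by completing $U(\mathfrak{g})/\{a:p(a)=0\}$. An associative algebra is a PI-algebra if there is a nonzero non-commutative polynomial $p$ in finitely many variables with $p(a_1,\ldots,a_n)=0$ for all elements $a_i$ of the algebra. *)

(* Defs.v *)
From HB Require Import structures.
From mathcomp Require Import all_boot all_order all_algebra.
From mathcomp Require Import reals.
From mathcomp Require Import complex.
From mathcomp Require Import finmap monalg.

Set Implicit Arguments.
Unset Strict Implicit.
Unset Printing Implicit Defensive.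

Import Order.TTheory GRing.Theory Num.Theory.
Local Open Scope ring_scope.

Definition cabs (R : realType) (z : R[i]) : R := ComplexField.Normc.normc z.

(* Free associative unital C-algebra C<X_0,...,X_{n-1}> (noncommutative
   polynomials in n variables): the monoid algebra of the free monoid on 'I_n. *)
Definition ncpoly (R : realType) (n : nat) := {malg R[i][{fmonom 'I_n}]}.

Definition ncvar (R : realType) (n : nat) (j : 'I_n) : ncpoly R n :=
  << fmu j >>.

Definition nceval (R : realType) (n : nat) (A : lalgType R[i])
    (P : ncpoly R n) (a : 'I_n -> A) : A :=
  \sum_(w <- msupp P) P@_w *: \prod_(j <- (w : seq 'I_n)) a j.

(* A 2-dimensional complex Lie algebra g with basis e0, e1 is determined by
   [e0, e1] = a e0 + b e1 (antisymmetry and Jacobi are automatic in dim 2);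
   g is non-abelian iff (a, b) <> (0, 0).
   U(g) = T(g) / (x y - y x - [x,y]) = C<X0,X1> / I(a,b), where I(a,b) is the
   two-sided ideal generated by the relator below. *)
Definition env_rel (R : realType) (a b : R[i]) : ncpoly R 2 :=
  ncvar R ord0 * ncvar R ord_max - ncvar R ord_max * ncvar R ord0
  - (a *: ncvar R ord0 + b *: ncvar R ord_max).

Inductive env_ideal (R : realType) (a b : R[i]) : ncpoly R 2 -> Prop :=
  | env_ideal_gen (u v : ncpoly R 2) : env_ideal a b (u * env_rel a b * v)
  | env_ideal_0 : env_ideal a b 0
  | env_ideal_add x y : env_ideal a b x -> env_ideal a b y -> env_ideal a b (x + y)
  | env_ideal_scale (c : R[i]) x : env_ideal a b x -> env_ideal a b (c *: x).

Definition submult_prenorm (R : realType) (A : lalgType R[i]) (p : A -> R) :=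
  [/\ forall x y : A, p (x + y) <= p x + p y,
      forall (c : R[i]) (x : A), p (c *: x) = cabs c * p x &
      forall x y : A, p (x * y) <= p x * p y].

(* A submultiplicative prenorm on U(g) = C<X0,X1>/I(a,b), presented through
   its lift p to C<X0,X1> (p is a submultiplicative seminorm vanishing on
   I(a,b); such lifts correspond bijectively to prenorms on the quotient). *)
Definition env_prenorm (R : realType) (a b : R[i]) (p : ncpoly R 2 -> R) :=
  submult_prenorm p /\ forall x, env_ideal a b x -> p x = 0.

Definition p_cauchy (R : realType) (A : lalgType R[i]) (p : A -> R)
    (u : nat -> A) :=
  forall e : R, 0 < e -> exists N : nat,
    forall m k : nat, (N <= m)%N -> (N <= k)%N -> p (u m - u k) < e.

Definition p_null (R : realType) (A : lalgType R[i]) (p : A -> R)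
    (u : nat -> A) :=
  forall e : R, 0 < e -> exists N : nat, forall k : nat, (N <= k)%N -> p (u k) < e.

(* The completion of A / {p = 0} is the algebra of p-Cauchy sequences in A
   modulo p-null sequences, with termwise operations.  Hence a noncommutative
   polynomial P vanishes identically on the completion iff for all
   p-Cauchy sequences u_0, ..., u_{n-1} the sequence P(u_0 k, ..., u_{n-1} k)
   is p-null.  The completion is a PI-algebra iff some nonzero P does so. *)
Definition completion_is_PI (R : realType) (A : lalgType R[i]) (p : A -> R) :=
  exists (n : nat) (P : ncpoly R n), P != 0 /\
    forall u : 'I_n -> nat -> A, (forall j, p_cauchy p (u j)) ->
      p_null p (fun k => nceval P (fun j => u j k)).

(* Main.v *)
Require Import Defs.
From HB Require Import structures.
From mathcomp Require Import all_boot all_order all_algebra.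
From mathcomp Require Import reals complex finmap monalg.
From mathcomp Require Import lra.
Import Order.TTheory GRing.Theory Num.Theory.
Local Open Scope ring_scope.

Section Eval.
Variables (R : realType) (n : nat) (A : lalgType R[i]) (a : 'I_n -> A).
Definition hmon (w : {fmonom 'I_n}) : A := \prod_(j <- (w : seq 'I_n)) a j.
Lemma hmon_mm : mmorphism hmon.
Proof.
split; last by rewrite /hmon fm1 big_nil.
by move=> u v; rewrite /hmon fmM big_cat.
Qed.
HB.instance Definition _ := monalg.isMultiplicative.Build _ _ hmon hmon_mm.

Lemma ncevalE (P : ncpoly R n) : nceval P a = mmap (in_alg A) hmon P.
Proof. by rewrite /nceval /mmap; apply: eq_bigr => w _; rewrite /= mulr_algl. Qed.

Hypothesis central : forall (c : R[i]) (x : A), x * c%:A = c *: x.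

Lemma nceval_mul (P Q : ncpoly R n) : nceval (P * Q) a = nceval P a * nceval Q a.
Proof.
rewrite !ncevalE.
have H : forall (g : ncpoly R n) m m', GRing.comm (in_alg A g@_m) (hmon m').
  by move=> g m m'; rewrite /GRing.comm /= central mulr_algl.
exact: ((commr_mmap_is_multiplicative H).1 P Q).
Qed.

Lemma nceval_add (P Q : ncpoly R n) : nceval (P + Q) a = nceval P a + nceval Q a.
Proof. by rewrite !ncevalE mmapD. Qed.

Lemma nceval_opp (P : ncpoly R n) : nceval (- P) a = - nceval P a.
Proof. by rewrite !ncevalE mmapN. Qed.

Lemma nceval_var j : nceval (ncvar R j) a = a j.
Proof. by rewrite ncevalE /ncvar mmapU /= mulr_algl scale1r /hmon fmU big_seq1. Qed.

Lemma nceval_exp (P : ncpoly R n) k : nceval (P ^+ k) a = nceval P a ^+ k.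
Proof.
elim: k => [|k IH]; last by rewrite !exprS nceval_mul IH.
by rewrite !expr0 ncevalE mmap1.
Qed.

Lemma nceval0 : nceval (0 : ncpoly R n) a = 0.
Proof. by rewrite ncevalE mmap0. Qed.
End Eval.



Section NC.
Variable R : realType.
Local Notation A0 := (ncpoly R 2).

Lemma ncpoly_central (c : R[i]) (x : A0) : x * c%:A = c *: x.
Proof.
have -> : c%:A = c%:MP :> A0 by rewrite -mul_malgC mulr1.
rewrite malgM_def malgZ_def fgmulgU /fgscale; apply: eq_bigr => k _.
by rewrite mulm1 mulrC.
Qed.

Lemma scalerAr' (c : R[i]) (x y : A0) : x * (c *: y) = c *: (x * y).
Proof. by rewrite -mul_malgC mulrA -[c%:MP]mulr1 mul_malgC ncpoly_central scalerAl. Qed.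

Lemma monom_prod (s : seq 'I_2) :
  << FMonom s >> = \prod_(j <- s) ncvar R j :> A0.
Proof.
elim: s => [|j s IH].
  by rewrite big_nil -fmoneE.
rewrite big_cons -IH /ncvar malgM_def fgmulUU mulr1; congr << _ *g _ >>.
by apply/eqP; rewrite fmP fmM fmU.
Qed.

Lemma gen_ind (Q : A0 -> Prop) :
  Q 1 -> Q (ncvar R ord0) -> Q (ncvar R ord_max) ->
  (forall u v, Q u -> Q v -> Q (u + v)) ->
  (forall c u, Q u -> Q (c *: u)) ->
  (forall u v, Q u -> Q v -> Q (u * v)) ->
  forall P, Q P.
Proof.
move=> Q1 QX0 QX1 QD QZ QM P.
have Q0 : Q 0 by rewrite -(scale0r 1); apply: QZ.
rewrite (monalgE P); apply: (big_ind Q) => // k _.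
have -> : << P@_k *g k >> = P@_k *: << k >> :> A0.
  by rewrite -mul_malgC malgM_def fgmulUU mulr1 mul1m.
apply: QZ; rewrite -(fmK k) monom_prod; apply: (big_ind Q) => // j _.
case: j => [[|[|m]] Hj] //.
  by have -> : Ordinal Hj = ord0 by apply/val_inj.
by have -> : Ordinal Hj = ord_max by apply/val_inj.
Qed.
End NC.

Section Eval2.
Variables (R : realType) (A : lalgType R[i]).
Lemma nceval_commpow (a2 : 'I_2 -> A) (central2 : forall (c : R[i]) (x : A), x * c%:A = c *: x) k :
  nceval ((ncvar R ord0 * ncvar R ord_max - ncvar R ord_max * ncvar R ord0) ^+ k) a2
  = (a2 ord0 * a2 ord_max - a2 ord_max * a2 ord0) ^+ k.
Proof.
rewrite (@nceval_exp _ _ _ _ central2) nceval_add nceval_opp.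
have h1 := @nceval_mul _ _ _ a2 central2 (ncvar R ord0) (ncvar R ord_max).
have h2 := @nceval_mul _ _ _ a2 central2 (ncvar R ord_max) (ncvar R ord0).
rewrite !nceval_var in h1 h2.
by congr (_ ^+ k); congr (_ - _).
Qed.
End Eval2.

Section Abs.
Variables (R : realType) (A : lalgType R[i]).
Hypothesis sAr : forall (k : R[i]) (x z : A), x * (k *: z) = k *: (x * z).
Variables (X0 X1 : A) (a b : R[i]) (p : A -> R).
Variables (c y : A).
Hypothesis Hc : c = X0 * X1 - X1 * X0.
Hypothesis Hy : y = a *: X0 + b *: X1.
Hypothesis Hab : (a, b) != (0, 0).
Hypothesis pD : forall x z, p (x + z) <= p x + p z.
Hypothesis pZ : forall k x, p (k *: x) = cabs k * p x.
Hypothesis pM : forall x z, p (x * z) <= p x * p z.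
Hypothesis pc : p (c - y) = 0.
Hypothesis gen : forall (Q : A -> Prop),
  Q 1 -> Q X0 -> Q X1 ->
  (forall u v, Q u -> Q v -> Q (u + v)) ->
  (forall c u, Q u -> Q (c *: u)) ->
  (forall u v, Q u -> Q v -> Q (u * v)) ->
  forall P, Q P.
Let N (z : A) := p z = 0.

Lemma pN x : p (- x) = p x.
Proof.
by rewrite -scaleN1r pZ /cabs normcN ComplexField.Normc.normc1 mul1r.
Qed.
Lemma p0 : p 0 = 0.
Proof. by rewrite -(scale0r (0 : A)) pZ /cabs ComplexField.Normc.normc0 mul0r. Qed.
Lemma pge0 x : 0 <= p x.
Proof.
have := pD x (- x); rewrite pN subrr p0 => H.
by rewrite -(pmulr_rge0 _ (ltr0Sn _ 1)) mulr2n mulrDl mul1r.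
Qed.

Lemma N0 : N 0. Proof. exact: p0. Qed.
Lemma ND x z : N x -> N z -> N (x + z).
Proof. rewrite /N => hx hz; apply/eqP; rewrite eq_le pge0 andbT; by have := pD x z; rewrite hx hz addr0. Qed.
Lemma NZ k x : N x -> N (k *: x).
Proof. by rewrite /N pZ => ->; rewrite mulr0. Qed.
Lemma NNeg x : N x -> N (- x).
Proof. by rewrite /N pN. Qed.
Lemma NMl u x : N x -> N (u * x).
Proof. rewrite /N => hx; apply/eqP; rewrite eq_le pge0 andbT; by have := pM u x; rewrite hx mulr0. Qed.
Lemma NMr u x : N x -> N (x * u).
Proof. rewrite /N => hx; apply/eqP; rewrite eq_le pge0 andbT; by have := pM x u; rewrite hx mul0r. Qed.
Lemma Ncy : N (c - y). Proof. exact: pc. Qed.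

Lemma L0 : X0 * y - y * X0 = b *: c.
Proof.
rewrite Hy Hc mulrDr mulrDl !sAr -!scalerAl scalerBr opprD addrACA subrr add0r.
by [].
Qed.
Lemma L1 : X1 * y - y * X1 = - (a *: c).
Proof.
rewrite Hy Hc mulrDr mulrDl !sAr -!scalerAl opprD addrACA [b *: _ - _]subrr addr0.
by rewrite -scalerBr -scalerN opprB.
Qed.
Lemma subKeq (u v w : A) : (u - v) - (u - w) = w - v.
Proof. by rewrite opprB addrC addrA subrK. Qed.
Lemma addKeq (u v w : A) : (u + v) - (u + w) = v - w.
Proof. by rewrite opprD addrACA subrr add0r. Qed.

Lemma Qcomm z : exists z', N (y * z - z' * y).
Proof.
elim/gen: z.
- by exists 1; rewrite mulr1 mul1r subrr; apply: N0.
- exists (X0 - b%:A).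
  have -> : y * X0 = X0 * y - b *: c by rewrite -L0 opprB addrC subrK.
  rewrite mulrBl mulr_algl subKeq -scalerBr; apply: NZ.
  by rewrite -opprB; apply: NNeg; apply: Ncy.
- exists (X1 + a%:A).
  have -> : y * X1 = X1 * y + a *: c by rewrite -[a *: c]opprK -L1 opprB addrC subrK.
  rewrite mulrDl mulr_algl addKeq -scalerBr; apply: NZ; apply: Ncy.
- move=> u v [u' hu] [v' hv]; exists (u' + v').
  by rewrite mulrDr mulrDl opprD addrACA; apply: ND.
- move=> k u [u' hu]; exists (k *: u').
  by rewrite sAr -scalerAl -scalerBr; apply: NZ.
- move=> u v [u' hu] [v' hv]; exists (u' * v').
  have -> : y * (u * v) - u' * v' * y = (y * u - u' * y) * v + u' * (y * v - v' * y).
    by rewrite mulrBl mulrBr !mulrA addrA subrK.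
  by apply: ND; [apply: NMr | apply: NMl].
Qed.

Lemma Qk k z : exists z', N (y ^+ k * z - z' * y ^+ k).
Proof.
elim: k z => [|k IH] z.
  by exists z; rewrite expr0 mulr1 mul1r subrr; apply: N0.
have [z1 h1] := Qcomm z; have [z2 h2] := IH z1.
exists z2.
have -> : y ^+ k.+1 * z - z2 * y ^+ k.+1 =
    y ^+ k * (y * z - z1 * y) + (y ^+ k * z1 - z2 * y ^+ k) * y.
  by rewrite exprSr mulrBr mulrBl !mulrA addrA subrK.
by apply: ND; [apply: NMl | apply: NMr].
Qed.

Definition Sk k (z : A) := exists w, N (z - w * y ^+ k).

Lemma SkD k u v : Sk k u -> Sk k v -> Sk k (u + v).
Proof. by move=> [w1 h1] [w2 h2]; exists (w1 + w2); rewrite mulrDl opprD addrACA; apply: ND. Qed.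
Lemma SkZ k e u : Sk k u -> Sk k (e *: u).
Proof. by move=> [w1 h1]; exists (e *: w1); rewrite -scalerAl -scalerBr; apply: NZ. Qed.
Lemma SkMl k u v : Sk k v -> Sk k (u * v).
Proof. by move=> [w1 h1]; exists (u * w1); rewrite -mulrA -mulrBr; apply: NMl. Qed.
Lemma SkMr k u v : Sk k u -> Sk k (u * v).
Proof.
move=> [w1 h1]; have [v' hv] := Qk k v; exists (w1 * v').
have -> : u * v - w1 * v' * y ^+ k = (u - w1 * y ^+ k) * v + w1 * (y ^+ k * v - v' * y ^+ k).
  by rewrite mulrBl mulrBr !mulrA addrA subrK.
by apply: ND; [apply: NMr | apply: NMl].
Qed.
Lemma Sk0 k : Sk k 0.
Proof. by exists 0; rewrite mul0r subrr; apply: N0. Qed.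
Lemma SkN k u : Sk k u -> Sk k (- u).
Proof. by move=> h; rewrite -scaleN1r; apply: SkZ. Qed.

Lemma Dclosed v : let D := fun u => Sk 1 (u * v - v * u) in
  D 1 /\ (forall u w, D u -> D w -> D (u + w)) /\
  (forall e u, D u -> D (e *: u)) /\ (forall u w, D u -> D w -> D (u * w)).
Proof.
split; first by rewrite mul1r mulr1 subrr; apply: Sk0.
split; first by move=> u w hu hw; rewrite mulrDl mulrDr opprD addrACA; apply: SkD.
split; first by move=> e u hu; rewrite -scalerAl sAr -scalerBr; apply: SkZ.
move=> u w hu hw.
have -> : u * w * v - v * (u * w) = u * (w * v - v * w) + (u * v - v * u) * w.
  by rewrite mulrBr mulrBl !mulrA addrA subrK.
by apply: SkD; [apply: SkMl | apply: SkMr].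
Qed.

Lemma commS u v : Sk 1 (u * v - v * u).
Proof.
have genc : forall v0, Sk 1 (X0 * v0 - v0 * X0) -> Sk 1 (X1 * v0 - v0 * X1) ->
    forall u, Sk 1 (u * v0 - v0 * u).
  move=> v0 h0 h1; have [D1 [DD [DZ DM]]] := Dclosed v0.
  by elim/gen.
have hc : Sk 1 c by exists 1; rewrite mul1r expr1; apply: Ncy.
have cX0 : forall w, Sk 1 (w * X0 - X0 * w).
  apply: genc; first by rewrite subrr; apply: Sk0.
  by rewrite -opprB -Hc; apply: SkN.
have cX1 : forall w, Sk 1 (w * X1 - X1 * w).
  apply: genc; last by rewrite subrr; apply: Sk0.
  by rewrite -Hc.
apply: genc; by rewrite -opprB; apply: SkN.
Qed.

Lemma SkM k u v : Sk k u -> Sk 1 v -> Sk k.+1 (u * v).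
Proof.
move=> [w1 h1] [w2 h2]; have [w' hw] := Qk k w2.
exists (w1 * w'); rewrite expr1 in h2.
have -> : u * v - w1 * w' * y ^+ k.+1 = (u - w1 * y ^+ k) * v
   + (w1 * y ^+ k * (v - w2 * y) + w1 * (y ^+ k * w2 - w' * y ^+ k) * y).
  by rewrite exprSr !mulrBr !mulrBl !mulrA !addrA subrK subrK.
apply: ND; first by apply: NMr.
by apply: ND; [apply: NMl | apply: NMr; apply: NMl].
Qed.

Lemma SkX k u : Sk 1 u -> Sk k (u ^+ k).
Proof.
move=> h; elim: k => [|k IH].
  by exists 1; rewrite !expr0 mul1r subrr; apply: N0.
by rewrite exprSr; apply: SkM.
Qed.


Lemma comm_scale k X : (k *: X) * y - y * (k *: X) = k *: (X * y - y * X).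
Proof. by rewrite -scalerAl sAr -scalerBr. Qed.

Lemma xex : exists x, N (x * y - y * x - y).
Proof.
have [b0|bn0] := eqVneq b 0.
  have an0 : a != 0 by apply: contraNneq Hab => ->; rewrite b0.
  exists (- a^-1 *: X1); rewrite comm_scale L1 scalerN scaleNr opprK scalerA mulVf //.
  by rewrite scale1r; apply: Ncy.
exists (b^-1 *: X0); rewrite comm_scale L0 scalerA mulVf //.
by rewrite scale1r; apply: Ncy.
Qed.

Lemma grp5 (P Q T U V : A) : P - T - (U + V) = (P - Q - U) + (Q - T - V).
Proof. by rewrite [RHS]addrACA [P - Q + _]addrA subrK -opprD. Qed.

Lemma adk x k : N (x * y - y * x - y) -> N (x * y ^+ k - y ^+ k * x - k%:R *: y ^+ k).
Proof.
move=> hx; elim: k => [|k IH].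
  by rewrite expr0 mulr1 mul1r subrr scale0r subr0; apply: N0.
have -> : k.+1%:R *: y ^+ k.+1 = k%:R *: y ^+ k * y + y ^+ k * y.
  by rewrite -scalerAl -exprSr -addn1 natrD scalerDl scale1r.
rewrite exprSr (grp5 _ (y ^+ k * x * y)).
have -> : x * (y ^+ k * y) - y ^+ k * x * y - k%:R *: y ^+ k * y
   = (x * y ^+ k - y ^+ k * x - k%:R *: y ^+ k) * y by rewrite !mulrBl mulrA.
have -> : y ^+ k * x * y - y ^+ k * y * x - y ^+ k * y
   = y ^+ k * (x * y - y * x - y) by rewrite !mulrBr !mulrA.
by apply: ND; [apply: NMr | apply: NMl].
Qed.

Lemma pyk x k : N (x * y - y * x - y) -> 2 * p x < k%:R -> N (y ^+ k).
Proof.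
move=> hx hk; have h := adk x k hx.
set D := x * y ^+ k - y ^+ k * x in h.
have h1 : p (k%:R *: y ^+ k) <= p D.
  have := pD (k%:R *: y ^+ k - D) D; rewrite subrK -opprB pN; rewrite /N in h; rewrite h add0r.
  by [].
have h2 : p D <= 2 * p x * p (y ^+ k).
  apply: (le_trans (pD _ _)); rewrite pN.
  have := pM x (y ^+ k); have := pM (y ^+ k) x; lra.
rewrite pZ /cabs normcMn ComplexField.Normc.normc1 in h1.
have := pge0 (y ^+ k); have := pge0 x; rewrite /N; nra.
Qed.

Lemma abs_main : exists K : nat, forall u v : A, p ((u * v - v * u) ^+ K.*2) = 0.
Proof.
have [x hx] := xex.
have px0 := pge0 x.
pose K := Num.bound (2 * p x).
have hK : 2 * p x < K%:R by apply: archi_boundP; lra.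
exists K => u v.
have hK2 : 2 * p x < K.*2%:R.
  apply: (lt_le_trans hK); rewrite ler_nat -addnn leq_addr //.
have hy := @pyk x _ hx hK2.
have [w hw] := @SkX K.*2 _ (commS u v).
apply/eqP; rewrite eq_le pge0 andbT.
have := pD ((u * v - v * u) ^+ K.*2 - w * y ^+ K.*2) (w * y ^+ K.*2).
rewrite subrK hw add0r => h; apply: (le_trans h).
by have := pM w (y ^+ K.*2); rewrite hy mulr0.
Qed.

End Abs.

Lemma mat_comm_sq (R : realType) :
  let m0 : 'M[R[i]]_2 := delta_mx 0 1 in let m1 : 'M[R[i]]_2 := delta_mx 1 0 in
  (m0 * m1 - m1 * m0) ^+ 2 = 1.
Proof.
move=> m0 m1.
have -> : m0 * m1 - m1 * m0 = delta_mx 0 0 - delta_mx 1 1.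
  by rewrite /m0 /m1 /GRing.mul /= !mul_delta_mx.
rewrite expr2 mulrBl !mulrBr /GRing.mul /= !mul_delta_mx !mul_delta_mx_0 //.
apply/matrixP => i j; rewrite !mxE.
case: i => [[|[|?]] ?]; case: j => [[|[|?]] ?] //=.
all: by rewrite ?subrr ?subr0 ?sub0r ?opprK.
Qed.


Theorem proposition3 (R : realType) (a b : R[i]) (p : ncpoly R 2 -> R) :
  (a, b) != (0, 0) ->
  env_prenorm a b p ->
  completion_is_PI p.
Proof.
move=> Hab [[pD pZ pM] pI].
have pc : p ((ncvar R ord0 * ncvar R ord_max - ncvar R ord_max * ncvar R ord0)
   - (a *: ncvar R ord0 + b *: ncvar R ord_max)) = 0.
  have := pI _ (@env_ideal_gen _ a b 1 1); rewrite mulr1 mul1r; exact.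
have [K HK] := @abs_main R (ncpoly R 2) (@scalerAr' R) (ncvar R ord0) (ncvar R ord_max)
  a b p _ _ erefl erefl Hab pD pZ pM pc (@gen_ind R).
exists 2%N, ((ncvar R ord0 * ncvar R ord_max - ncvar R ord_max * ncvar R ord0) ^+ K.*2).
split.
  apply/negP => /eqP H0.
  pose m : 'I_2 -> 'M[R[i]]_2 := fun j => if j == ord0 then delta_mx 0 1 else delta_mx 1 0.
  have cm : forall (c : R[i]) (x : 'M[R[i]]_2), x * c%:A = c *: x.
    by move=> c x; rewrite -scalerAr mulr1.
  have ev0 : m ord0 = delta_mx 0 1 by rewrite /m eqxx.
  have ev1 : m ord_max = delta_mx 1 0 by [].
  have := @nceval0 R 2 _ m.
  rewrite -{1}H0 (@nceval_commpow R _ m cm K.*2) ev0 ev1 -mul2n exprM mat_comm_sq expr1n.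
  by move=> /eqP; rewrite oner_eq0.
move=> u _ e he; exists 0%N => k _.
by rewrite (@nceval_commpow R _ _ (@ncpoly_central R)) HK.
Qed.
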